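(* Let $n\geq 0$ and $k\geq 1$ be integers with $k\not\equiv 1 \pmod 3$. Then $\gcd(B_{k,n},C_{k,n})=1$.
   Context: For an integer $k\geq 1$, the generalized balancing numbers are defined by $B_{k,0}=0$, $B_{k,1}=1$ and $B_{k,n}=3kB_{k,n-1}+(1-k)B_{k,n-2}$ for $n\geq 2$; the generalized balancing-Lucas numbers are defined by $C_{k,0}=1$, $C_{k,1}=3$ and $C_{k,n}=3kC_{k,n-1}+(1-k)C_{k,n-2}$ for $n\geq 2$. *)

(* Defs.v *)
From mathcomp Require Import all_boot all_algebra.
Set Implicit Arguments. Unset Strict Implicit. Unset Printing Implicit Defensive.
Import GRing.Theory Num.Theory.
Local Open Scope ring_scope.

Fixpoint gbal_pair (k : nat) (a0 a1 : int) (n : nat) : int * int :=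
  match n with
  | 0%N => (a0, a1)
  | n'.+1 => let p := gbal_pair k a0 a1 n' in
             (p.2, (3 * k%:Z) * p.2 + (1 - k%:Z) * p.1)
  end.

Definition B (k n : nat) : int := (gbal_pair k 0 1 n).1.
Definition C (k n : nat) : int := (gbal_pair k 1 3 n).1.

(* Main.v *)
Require Import Defs.
From mathcomp Require Import all_boot all_algebra.
From mathcomp Require Import ring zify.
Import GRing.Theory Num.Theory.
Local Open Scope ring_scope.

Lemma recB (k n : nat) :
  B k n.+2 = (3 * k%:Z) * B k n.+1 + (1 - k%:Z) * B k n.
Proof. by []. Qed.

Lemma modB (k n : nat) :
  exists q1 q2 : int, B k n.+1 = (3 ^+ n + (k%:Z - 1) * q1)%R /\
                      B k n.+2 = (3 ^+ n.+1 + (k%:Z - 1) * q2)%R.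
Proof.
elim: n => [|n [q1 [q2 [H1 H2]]]].
  exists 0, 3; split; first by rewrite /B /= expr0 mulr0 addr0.
  rewrite /B /= expr1 !mulr1 mulr0 addr0; ring.
exists q2, (3 * 3 ^+ n.+1 + 3 * k%:Z * q2 - B k n.+1)%R; split => //.
rewrite recB H2 H1 !exprS; ring.
Qed.

Lemma cop3 (k : nat) : (1 <= k)%N -> (k %% 3 != 1)%N -> coprimez 3 (k%:Z - 1).
Proof.
move=> k1 k3; rewrite coprimezE.
have -> : `|(k%:Z - 1)%R|%N = (k - 1)%N by lia.
rewrite (prime_coprime _ (isT : prime 3)).
apply/negP => /dvdnP [m Hm]; move/eqP: k3; apply.
have -> : k = (m * 3 + 1)%N by lia.
by rewrite modnMDl.
Qed.

Lemma copB (k n : nat) : (1 <= k)%N -> (k %% 3 != 1)%N ->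
  coprimez (B k n.+1) (1 - k%:Z).
Proof.
move=> k1 k3; have [q1 [_ [H1 _]]] := modB k n.
rewrite H1 /coprimez.
have -> : (1 - k%:Z = - (k%:Z - 1))%R by ring.
rewrite gcdzN gcdzC [_ + (_ * q1)]addrC [_ * q1]mulrC gcdzMDl gcdzC.
by have := coprimezXl n (cop3 k k1 k3).
Qed.

Lemma gcdBB (k n : nat) : (1 <= k)%N -> (k %% 3 != 1)%N ->
  gcdz (B k n) (B k n.+1) = 1.
Proof.
move=> k1 k3; elim: n => [|n IH]; first by [].
rewrite recB gcdzMDl Gauss_gcdzr; first by rewrite gcdzC.
exact: (copB k n k1 k3).
Qed.

Lemma CB (k n : nat) :
  C k n = (- (3 * (k%:Z - 1))) * B k n + B k n.+1.
Proof.
suff : C k n = (- (3 * (k%:Z - 1))) * B k n + B k n.+1 /\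
       C k n.+1 = (- (3 * (k%:Z - 1))) * B k n.+1 + B k n.+2 by case.
elim: n => [|n [H1 H2]]; first by rewrite /C /B /=; split; ring.
split => //.
have -> : C k n.+2 = (3 * k%:Z) * C k n.+1 + (1 - k%:Z) * C k n by [].
rewrite H1 H2 !recB; ring.
Qed.

Local Close Scope ring_scope.

Theorem mainTheorem13 (k n : nat) :
  (1 <= k)%N -> (k %% 3 != 1)%N -> gcdz (B k n) (C k n) = 1%N.
Proof.
move=> k1 k3; rewrite CB gcdzMDl; exact: gcdBB.
Qed.
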